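(* Let $L$ be a doubly even code of length $n$ and let $\phi\colon E_n\to SO_n$ be the homomorphism $\phi(i_1,\dots,i_n)=\operatorname{diag}\bigl((-1)^{i_1},\dots,(-1)^{i_n}\bigr)$. Then $\phi(L)$ has a finite centralizer in $SO_n$ if and only if a generator matrix of $L$ has distinct columns.
   Context: $k$ is an algebraically closed field of characteristic $0$ and $SO_n=SO_n(k)$. $E_n\subset(\mathbb{Z}/2\mathbb{Z})^n$ is the subgroup of vectors of even weight, where the weight of a vector is its number of coordinates equal to $1$. A doubly even code of length $n$ is a $\mathbb{Z}/2\mathbb{Z}$-subspace $L\subset(\mathbb{Z}/2\mathbb{Z})^n$ in which every element has weight divisible by $4$. A generator matrix of $L$ is a matrix over $\mathbb{Z}/2\mathbb{Z}$ with $n$ columns whose rows span $L$. *)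

(* Defs.v *)
From HB Require Import structures.
From mathcomp Require Import all_boot all_order all_algebra all_fingroup.
Set Implicit Arguments. Unset Strict Implicit. Unset Printing Implicit Defensive.
Import GRing.Theory.
Local Open Scope ring_scope.

Definition weight n (v : 'rV['F_2]_n) : nat := #|[set i : 'I_n | v 0 i != 0]|.

Definition E_n n : {set 'rV['F_2]_n} := [set v | ~~ odd (weight v)].

Definition is_subspace n (L : {set 'rV['F_2]_n}) : Prop :=
  0 \in L /\ (forall u v, u \in L -> v \in L -> u + v \in L).

Definition doubly_even n (L : {set 'rV['F_2]_n}) : Prop :=
  is_subspace L /\ (forall v, v \in L -> (4 %| weight v)%N).

Definition generator_matrix n m (G : 'M['F_2]_(m, n)) (L : {set 'rV['F_2]_n}) : Prop :=
  forall v : 'rV['F_2]_n, v \in L <-> (v <= G)%MS.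

Definition distinct_columns n m (G : 'M['F_2]_(m, n)) : Prop :=
  forall j1 j2 : 'I_n, col j1 G = col j2 G -> j1 = j2.

Definition inSO (k : fieldType) n (M : 'M[k]_n) : bool :=
  (M^T *m M == 1%:M) && (\det M == 1).

Definition phi (k : fieldType) n (v : 'rV['F_2]_n) : 'M[k]_n :=
  diag_mx (\row_i ((-1) ^+ (nat_of_ord (v 0 i)))).

Definition centralizer_SO (k : fieldType) n (L : {set 'rV['F_2]_n}) (M : 'M[k]_n) : Prop :=
  inSO M /\ (forall v, v \in L -> M *m phi k v = phi k v *m M).

Definition finite_pred (T : eqType) (P : T -> Prop) : Prop :=
  exists s : seq T, forall x, P x -> x \in s.

(* Main.v *)
Require Import Defs.
From HB Require Import structures.
From mathcomp Require Import all_boot all_order all_algebra all_fingroup.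
From mathcomp Require Import ring.
Set Implicit Arguments. Unset Strict Implicit. Unset Printing Implicit Defensive.
Import GRing.Theory.
Local Open Scope ring_scope.

Definition inS n (j1 j2 l : 'I_n) := (l == j1) || (l == j2).
Definition g2 n (j2 l : 'I_n) : 'I_2 := if l == j2 then ord_max else ord0.
Definition emb (k : fieldType) n (j1 j2 : 'I_n) (A : 'M[k]_2) : 'M[k]_n :=
  \matrix_(p, q) if inS j1 j2 p && inS j1 j2 q then A (g2 j2 p) (g2 j2 q) else (p == q)%:R.

Lemma sumS (k : fieldType) n (j1 j2 : 'I_n) (F : 'I_n -> k) : j1 != j2 ->
  \sum_(l | inS j1 j2 l) F l = F j1 + F j2.
Proof.
move=> ne; rewrite (bigD1 j1) /inS ?eqxx //= (bigD1 j2) /= ?eqxx ?orbT 1?eq_sym //.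
rewrite big1 ?addr0 // => l /andP[/andP[]]; rewrite /inS => /orP[]/eqP->; rewrite eqxx //= andbF.
Qed.

Lemma mx2E (k : fieldType) (A B : 'M[k]_2) a c :
  (A *m B) a c = A a ord0 * B ord0 c + A a ord_max * B ord_max c.
Proof. rewrite !mxE big_ord_recr /= big_ord_recr big_ord0 /= add0r.
by have -> : widen_ord (leqnSn 1) ord_max = ord0 :> 'I_2 by apply/val_inj.
Qed.

Lemma emb_mul (k : fieldType) n (j1 j2 : 'I_n) (A B : 'M[k]_2) : j1 != j2 ->
  emb j1 j2 (A *m B) = emb j1 j2 A *m emb j1 j2 B.
Proof.
move=> ne; apply/matrixP => p q; rewrite /emb [LHS]mxE mx2E.
rewrite [RHS]mxE (bigID (inS j1 j2)) /= sumS //.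
rewrite !mxE.
have S1 : inS j1 j2 j1 by rewrite /inS eqxx.
have S2 : inS j1 j2 j2 by rewrite /inS eqxx orbT.
have g1 : g2 j2 j1 = ord0 by rewrite /g2 (negPf ne).
have g22 : g2 j2 j2 = ord_max by rewrite /g2 eqxx.
rewrite S1 S2 g1 g22 /=.
case Sp: (inS j1 j2 p); case Sq: (inS j1 j2 q) => /=.
- rewrite big1 ?addr0 // => l /negPf Sl; rewrite !mxE Sl Sp /=.
  have -> : (p == l) = false by apply/negP => /eqP E; rewrite E Sl in Sp.
  by rewrite mul0r.
- rewrite big1 ?addr0.
    have -> : (p == q) = false by apply/negP => /eqP E; rewrite E Sq in Sp.
    have -> : (j1 == q) = false by apply/negP => /eqP E; rewrite -E S1 in Sq.
    have -> : (j2 == q) = false by apply/negP => /eqP E; rewrite -E S2 in Sq.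
    by rewrite !mulr0 addr0.
  move=> l /negPf Sl; rewrite !mxE Sl Sp /=.
  have -> : (p == l) = false by apply/negP => /eqP E; rewrite E Sl in Sp.
  by rewrite mul0r.
- have -> : (p == j1) = false by apply/negP => /eqP E; rewrite E S1 in Sp.
  have -> : (p == j2) = false by apply/negP => /eqP E; rewrite E S2 in Sp.
  rewrite !mul0r addr0 add0r (bigD1 p) ?Sp //= big1 ?addr0.
    by rewrite !mxE Sp eqxx mul1r.
  by move=> l /andP[Sl lp]; rewrite !mxE (negPf Sl) Sp /= eq_sym (negPf lp) mul0r.
- have -> : (p == j1) = false by apply/negP => /eqP E; rewrite E S1 in Sp.
  have -> : (p == j2) = false by apply/negP => /eqP E; rewrite E S2 in Sp.
  rewrite !mul0r addr0 add0r (bigD1 p) ?Sp //= big1 ?addr0.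
    by rewrite !mxE Sp eqxx mul1r.
  by move=> l /andP[Sl lp]; rewrite !mxE (negPf Sl) Sp /= eq_sym (negPf lp) mul0r.
Qed.

Lemma natf_inj (k : fieldType) (hk : [pchar k] =i pred0) (a b : nat) :
  (a%:R = b%:R :> k) -> a = b.
Proof.
have H := ((pcharf0P k).1 hk).
wlog le : a b / (a <= b)%N.
  move=> W E; case: (leqP a b) => [|/ltnW] h; first exact: W.
  by symmetry; apply: W.
move=> E; have : ((b - a)%:R == 0 :> k).
  by rewrite natrB // E subrr.
by rewrite H subn_eq0 => ba; apply/eqP; rewrite eqn_leq le.
Qed.

Lemma I2 (a : 'I_2) : a = ord0 \/ a = ord_max.
Proof. by case: a => [[|[|]]] // Hi; [left|right]; apply/val_inj. Qed.

Lemma emb_tr (k : fieldType) n (j1 j2 : 'I_n) (A : 'M[k]_2) :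
  (emb j1 j2 A)^T = emb j1 j2 A^T.
Proof. by apply/matrixP => p q; rewrite !mxE andbC eq_sym. Qed.

Lemma g2_eq n (j1 j2 p q : 'I_n) : j1 != j2 -> inS j1 j2 p -> inS j1 j2 q ->
  (g2 j2 p == g2 j2 q) = (p == q).
Proof.
rewrite /inS /g2 => ne /orP[]/eqP-> /orP[]/eqP->; rewrite ?eqxx ?(negPf ne) //.
by rewrite [RHS]eq_sym (negPf ne).
Qed.

Lemma emb1 (k : fieldType) n (j1 j2 : 'I_n) : j1 != j2 ->
  emb j1 j2 (1%:M : 'M[k]_2) = 1%:M.
Proof.
move=> ne; apply/matrixP => p q; rewrite !mxE.
case Sp: (inS j1 j2 p); case Sq: (inS j1 j2 q) => //=.
by rewrite (g2_eq ne).
Qed.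

Lemma emb_comm (k : fieldType) n (j1 j2 : 'I_n) (A : 'M[k]_2) (v : 'rV['F_2]_n) :
  v 0 j1 = v 0 j2 -> emb j1 j2 A *m phi k v = phi k v *m emb j1 j2 A.
Proof.
move=> e; rewrite /phi mul_mx_diag mul_diag_mx; apply/matrixP => p q; rewrite !mxE.
case: ifP => [/andP[Sp Sq]|_].
  have -> : v 0 p = v 0 q.
    by move: Sp Sq; rewrite /inS => /orP[]/eqP-> /orP[]/eqP->.
  by rewrite mulrC.
by case: eqP => [->|_]; rewrite ?mulr0 ?mul0r ?mulr1 ?mul1r.
Qed.

Definition Lm (k : fieldType) (x : k) : 'M[k]_2 := 1%:M + x *: delta_mx ord_max ord0.

Lemma det_embL (k : fieldType) n (j1 j2 : 'I_n) (x : k) : (j1 < j2)%N ->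
  \det (emb j1 j2 (Lm x)) = 1.
Proof.
move=> lt; have ne : j1 != j2 by rewrite neq_ltn lt.
rewrite det_trig.
  rewrite big1 // => p _; rewrite !mxE; case: ifP => [_|]; last by rewrite eqxx.
  by case: (I2 (g2 j2 p)) => ->; rewrite /= ?mulr0 ?addr0.
apply/forallP => p; apply/forallP => q; apply/implyP => pq; rewrite !mxE.
case: ifP => [/andP[Sp Sq]|_]; last first.
  by have -> : (p == q) = false by apply/negP => /eqP E; rewrite E ltnn in pq.
move: Sp Sq pq; rewrite /inS => /orP[]/eqP-> /orP[]/eqP->; rewrite ?ltnn //.
- by rewrite /g2 eqxx (negPf ne) /= mulr0 addr0.
- by move=> h; have := ltn_trans h lt; rewrite ltnn.
Qed.

Lemma det_embU (k : fieldType) n (j1 j2 : 'I_n) (x : k) : (j1 < j2)%N ->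
  \det (emb j1 j2 (Lm x)^T) = 1.
Proof. by move=> lt; rewrite -emb_tr det_tr det_embL. Qed.

Definition Rm (k : fieldType) (s : k) : 'M[k]_2 :=
  \matrix_(a, b) if a == b then (1 - s^+2) / (1 + s^+2)
                 else if a == ord0 then 2 * s / (1 + s^+2) else - (2 * s / (1 + s^+2)).

Lemma Rm_eq (k : fieldType) (s : k) : 1 + s^+2 != 0 ->
  Rm s = (Lm s)^T *m Lm (- (2 * s) / (1 + s^+2)) *m (Lm s)^T.
Proof.
move=> nz; apply/matrixP => a b.
by case: (I2 a) => ->; case: (I2 b) => ->; rewrite !mx2E !mxE /=; field.
Qed.

Lemma Rm_orth (k : fieldType) (s : k) : 1 + s^+2 != 0 ->
  (Rm s)^T *m Rm s = 1%:M.
Proof.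
move=> nz; apply/matrixP => a b.
by case: (I2 a) => ->; case: (I2 b) => ->; rewrite !mx2E !mxE /=; field.
Qed.

Lemma nz2 (k : fieldType) (hk : [pchar k] =i pred0) (x : k) : x *+ 2 = 0 -> x = 0.
Proof.
move/eqP; rewrite -mulr_natr mulf_eq0 ((pcharf0P k).1 hk) /= orbF.
by move/eqP.
Qed.

Lemma f2_sign (k : fieldType) (hk : [pchar k] =i pred0) (a b : 'F_2) (x : k) :
  a != b -> x * (-1) ^+ (nat_of_ord b) = (-1) ^+ (nat_of_ord a) * x -> x = 0.
Proof.
case: a => [[|[|a]] Ha] //; case: b => [[|[|b]] Hb] //= _;
  rewrite ?expr0 ?expr1 ?mulr1 ?mul1r ?mulrN1 ?mulN1r => h; apply: nz2 => //.
  by rewrite mulr2n -{1}h addNr.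
by rewrite mulr2n {1}h addNr.
Qed.

Lemma col_eq_v n m (L : {set 'rV['F_2]_n}) (G : 'M['F_2]_(m, n)) (j1 j2 : 'I_n) v :
  generator_matrix G L -> col j1 G = col j2 G -> v \in L -> v 0 j1 = v 0 j2.
Proof.
move=> hG hc /hG /submxP[w ->]; rewrite !mxE; apply: eq_bigr => r _; congr (_ * _).
by have := congr1 (fun M : 'M['F_2]_(m, 1) => M r 0) hc; rewrite !mxE.
Qed.

Lemma not_fin (k : fieldType) (hk : [pchar k] =i pred0) n (L : {set 'rV['F_2]_n})
  m (G : 'M['F_2]_(m, n)) (hG : generator_matrix G L) (j1 j2 : 'I_n)
  (lt : (j1 < j2)%N) (hc : col j1 G = col j2 G) :
  ~ finite_pred (@centralizer_SO k n L).
Proof.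
move=> [sq Hs].
have ne : j1 != j2 by rewrite neq_ltn lt.
pose f (s : nat) := emb j1 j2 (Rm (s%:R : k)).
have nz s : 1 + (s%:R : k)^+2 != 0.
  have -> : 1 + (s%:R : k)^+2 = (1 + s^2)%:R by rewrite natrD natrX.
  by rewrite ((pcharf0P k).1 hk).
have cen s : @centralizer_SO k n L (f s).
  split.
    apply/andP; split.
      by rewrite /f emb_tr -emb_mul // Rm_orth // emb1.
    by rewrite /f Rm_eq // !emb_mul // !det_mulmx det_embL // det_embU // !mul1r.
  move=> v vL; apply: emb_comm; exact: col_eq_v hG hc vL.
have finj : injective f.
  move=> s t E; have := congr1 (fun M : 'M[k]_n => M j1 j1) E; rewrite /f !mxE /inS eqxx /= eqxx.
  move/eqP; rewrite eqr_div // => /eqP h.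
  set a := (s%:R : k)^+2 in h; set b := (t%:R : k)^+2 in h.
  have : (b - a) *+ 2 = 0.
    have e : (b - a) *+ 2 = (1 - a) * (1 + b) - (1 - b) * (1 + a) by ring.
    by rewrite e h subrr.
  move/(nz2 hk)/eqP; rewrite subr_eq0 /a /b -!natrX => /eqP /(natf_inj hk) /eqP.
  by rewrite eqn_sqr => /eqP.
have : (size (map f (iota 0 (size sq).+1)) <= size sq)%N.
  apply: uniq_leq_size; first by rewrite map_inj_uniq // iota_uniq.
  by move=> M /mapP[s _ ->]; apply: Hs; apply: cen.
by rewrite size_map size_iota ltnn.
Qed.

Theorem lemma8p15 (k : closedFieldType) (hk : [pchar k] =i pred0)
  (n : nat) (L : {set 'rV['F_2]_n}) (hL : doubly_even L)
  (m : nat) (G : 'M['F_2]_(m, n)) (hG : generator_matrix G L) :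
  finite_pred (@centralizer_SO k n L) <-> distinct_columns G.
Proof.
split.
  move=> fin j1 j2 hc; case: (ltngtP j1 j2) => [lt|lt|/val_inj //]; exfalso.
    exact: (not_fin hk hG lt hc fin).
  exact: (not_fin hk hG lt (esym hc) fin).
move=> dc.
exists [seq diag_mx (\row_i (if (f : {ffun 'I_n -> bool}) i then 1 else -1)) : 'M[k]_n | f <- enum {ffun 'I_n -> bool}].
move=> M [/andP[/eqP orth _] comm].
have diag p q : p != q -> M p q = 0.
  move=> pq.
  have [r Hr] : exists r, G r p != G r q.
    case: (boolP [exists r, G r p != G r q]) => [/existsP//|/existsPn H]; exfalso.
    move/negP: pq; apply; apply/eqP/dc; apply/matrixP => r c.
    by rewrite !mxE; apply/eqP; move/negPn: (H r).
  have vL : row r G \in L by apply/hG; exact: row_sub.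
  have := congr1 (fun N : 'M[k]_n => N p q) (comm _ vL).
  rewrite /phi mul_mx_diag mul_diag_mx !mxE.
  exact: (@f2_sign k hk (G r p) (G r q) (M p q) Hr).
have diagv p : M p p = 1 \/ M p p = -1.
  have := congr1 (fun N : 'M[k]_n => N p p) orth.
  rewrite !mxE (bigD1 p) //= big1 ?addr0; last first.
    by move=> l lp; rewrite !mxE diag ?mul0r.
  rewrite eqxx /= mxE => h.
  have : (M p p - 1) * (M p p + 1) = 0.
    have e : (M p p - 1) * (M p p + 1) = M p p * M p p - 1 by ring.
    by rewrite e h subrr.
  move/eqP; rewrite mulf_eq0 => /orP[/eqP e|/eqP e]; [left|right].
    by apply/eqP; rewrite -subr_eq0 e.
  by apply/eqP; rewrite -subr_eq0 opprK e.
apply/mapP; exists [ffun i => M i i == 1]; first by rewrite mem_enum.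
apply/matrixP => p q; rewrite !mxE ffunE.
case: (eqVneq p q) => [<-|pq]; last by rewrite diag // mulr0n.
rewrite mulr1n; case: (diagv p) => ->; rewrite ?eqxx //.
by case: eqP.
Qed.
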